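(* Let $\mathcal{L}\subseteq\{0,1\}^n$ be a nonempty lattice, i.e. a nonempty set of points closed under coordinatewise minimum and maximum. Then the function $d_{\mathcal{L}}:\{0,1\}^n\to\mathbb{R}$, $d_{\mathcal{L}}(x) = \min_{y\in\mathcal{L}} \|x-y\|_1$, is submodular.
   Context: A function $g:\{0,1\}^n\to\mathbb{R}$ is submodular if $g(x\vee y)+g(x\wedge y)\le g(x)+g(y)$ for all $x,y$, where $\vee,\wedge$ are coordinatewise max and min (equivalently, $g(x+\mathbf{e}_i)-g(x)\ge g(y+\mathbf{e}_i)-g(y)$ whenever $x\le y$, $x_i=y_i=0$). *)

(* Defs.v *)
From mathcomp Require Import all_boot all_order all_algebra.
Set Implicit Arguments. Unset Strict Implicit. Unset Printing Implicit Defensive.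
Import Order.TTheory GRing.Theory Num.Theory.

Definition cube (n : nat) := {ffun 'I_n -> bool}.

Definition vjoin n (x y : cube n) : cube n := [ffun i => x i || y i].
Definition vmeet n (x y : cube n) : cube n := [ffun i => x i && y i].

Definition l1dist n (x y : cube n) : nat := #|[set i | x i != y i]|.

Definition is_lattice n (L : {set cube n}) : Prop :=
  forall x y, x \in L -> y \in L -> vjoin x y \in L /\ vmeet x y \in L.

(* d_L(x) = min_{y in L} ||x - y||_1 ; the initial value n is an upper bound
   on every distance, so for nonempty L this is exactly the minimum. *)
Definition distL n (L : {set cube n}) (x : cube n) : nat :=
  \big[minn/n]_(y in L) l1dist x y.

Definition submodular (R : numDomainType) n (g : cube n -> R) : Prop :=
  forall x y, (g (vjoin x y) + g (vmeet x y) <= g x + g y)%R.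

(* Main.v *)
Require Import Defs.
From mathcomp Require Import all_boot all_order all_algebra.
Import Order.TTheory GRing.Theory Num.Theory.

Lemma l1dist_sum n (x y : cube n) : l1dist x y = \sum_i (x i != y i : nat).
Proof.
rewrite /l1dist -sum1_card big_mkcond /=; apply: eq_bigr => i _.
by rewrite inE; case: (x i != y i).
Qed.

Lemma l1dist_le n (x y : cube n) : l1dist x y <= n.
Proof. by rewrite /l1dist -[X in _ <= X]card_ord max_card. Qed.

Lemma bigmin_seq_le (m : nat) (T : eqType) (s : seq T) (P : pred T) (F : T -> nat) y :
  y \in s -> P y -> \big[minn/m]_(z <- s | P z) F z <= F y.
Proof.
elim: s => [|z s IH] //; rewrite in_cons big_cons => /orP[/eqP<-|ys] Py.
  by rewrite Py geq_minl.
case: (P z); last exact: IH.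
by rewrite geq_min IH ?orbT.
Qed.

Lemma distL_le n (L : {set cube n}) x y : y \in L -> distL L x <= l1dist x y.
Proof. by move=> yL; apply: bigmin_seq_le => //; rewrite mem_index_enum. Qed.

Lemma distL_att n (L : {set cube n}) x : L != set0 ->
  exists2 a, a \in L & distL L x = l1dist x a.
Proof.
case/set0Pn=> a0 a0L.
have : (exists2 a, a \in L & distL L x = l1dist x a) \/ distL L x = n.
  rewrite /distL; apply: (big_ind (fun v => (exists2 a, a \in L & v = l1dist x a) \/ v = n)).
  - by right.
  - by move=> u v Hu Hv; rewrite /minn; case: ifP.
  - by move=> a aL; left; exists a.
case=> // Hn; exists a0 => //; apply/eqP; rewrite eqn_leq distL_le //= Hn l1dist_le //.
Qed.

Lemma key n (x y a b : cube n) :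
  l1dist (vjoin x y) (vjoin a b) + l1dist (vmeet x y) (vmeet a b)
  <= l1dist x a + l1dist y b.
Proof.
rewrite !l1dist_sum -!big_split /=; apply: leq_sum => i _.
by rewrite !ffunE; case: (x i); case: (y i); case: (a i); case: (b i).
Qed.

Theorem lemma4 (R : realFieldType) (n : nat) (L : {set cube n}) :
  L != set0 -> is_lattice L ->
  submodular (fun x => ((distL L x)%:R : R)%R).
Proof.
move=> L0 HL x y /=.
have [a aL ea] := @distL_att n L x L0.
have [b bL eb] := @distL_att n L y L0.
have [jL mL] := HL a b aL bL.
rewrite -!natrD ler_nat ea eb.
apply: (leq_trans _ (@key n x y a b)).
by apply: leq_add; apply: distL_le.
Qed.
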